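(* Let $n\geq 2$ be an integer, and for real $x$ let $\omega=\frac{x+\sqrt{x^2+4}}{2}$. Then $$\Psi_n(x)=\begin{cases}-\dfrac{\Phi_n(-\omega^2)}{\omega^{\varphi(n)}}&\text{if } n=2;\\[2ex] \dfrac{\Phi_n(-\omega^2)}{\omega^{\varphi(n)}}&\text{if } n\geq 3.\end{cases}$$ Equivalently, since $\omega-\omega^{-1}=x$, $\Psi_n(\omega-\omega^{-1})$ equals the right-hand side.
   Context: The Fibonacci polynomials are defined by $F_1(x)=1$, $F_2(x)=x$, and $F_n(x)=xF_{n-1}(x)+F_{n-2}(x)$ for $n\geq 3$. For $n\geq 2$, the $n$-th fibotomic polynomial $\Psi_n(x)\in\mathbb{Z}[x]$ is the product of the monic irreducible factors of $F_n(x)$ which are not factors of $F_k(x)$ for any $k<n$; also $\Psi_1(x)=1$. Thus $F_n(x)=\prod_{d\mid n}\Psi_d(x)$ for all $n\geq1$. $\Phi_n(x)$ denotes the $n$-th cyclotomic polynomial and $\varphi$ is Euler's totient function. *)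

(* Defs.v *)
From HB Require Import structures.
From mathcomp Require Import all_boot all_order all_algebra all_field.
Set Implicit Arguments. Unset Strict Implicit. Unset Printing Implicit Defensive.
Import Order.TTheory GRing.Theory Num.Theory.
Local Open Scope ring_scope.

(* Fibonacci polynomials over Q: F_0 = 0, F_1 = 1, F_(n+2) = X F_(n+1) + F_n.
   (So F_1 = 1, F_2 = X as in the paper.) *)
Fixpoint fibp_pair (n : nat) : {poly rat} * {poly rat} :=
  match n with
  | 0 => (0, 1)
  | m.+1 => let: (a, b) := fibp_pair m in (b, 'X * b + a)
  end.
Definition fibp (n : nat) : {poly rat} := (fibp_pair n).1.

(* p is the n-th fibotomic polynomial: p is the product of the (distinct)
   monic irreducible factors (over Q) of F_n that do not divide any F_k, 1<=k<n.
   Being such a product is expressed as: p is monic, squarefree, and its monic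
   irreducible divisors are exactly those factors. *)
Definition is_fibotomic (n : nat) (p : {poly rat}) : Prop :=
  [/\ p \is monic,
      (forall q : {poly rat}, irreducible_poly q -> ~~ (q ^+ 2 %| p)) &
      (forall q : {poly rat}, q \is monic -> irreducible_poly q ->
         (q %| p) = (q %| fibp n) && [forall k : 'I_n, (0 < val k)%N ==> ~~ (q %| fibp k)])].

(* Main.v *)
Require Import Defs.
From HB Require Import structures.
From mathcomp Require Import all_boot all_order all_algebra all_field.
From mathcomp Require Import ring lra zify.
From mathcomp Require Import cyclic.
From Stdlib Require Import Classical.
Set Implicit Arguments. Unset Strict Implicit. Unset Printing Implicit Defensive.
Import Order.TTheory GRing.Theory Num.Theory.
Local Open Scope ring_scope.

Lemma fibp_pairE n : fibp_pair n = (fibp n, fibp n.+1).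
Proof.
elim: n => [//|n IH]. rewrite /= IH /fibp /= IH //.
Qed.

Lemma fibp0 : fibp 0 = 0. Proof. by []. Qed.
Lemma fibp1 : fibp 1 = 1. Proof. by []. Qed.
Lemma fibpSS n : fibp n.+2 = 'X * fibp n.+1 + fibp n.
Proof. by rewrite {1}/fibp /= fibp_pairE. Qed.

Lemma fib_add m n : fibp (m + n).+1 = fibp m.+1 * fibp n.+1 + fibp m * fibp n.
Proof.
elim: m n => [|m IH] n; first by rewrite add0n fibp1 fibp0 mul1r mul0r addr0.
rewrite addSnnS IH !fibpSS; ring.
Qed.

Lemma fib_coprime n : coprimep (fibp n.+1) (fibp n).
Proof.
elim: n => [|n IH]; first by rewrite fibp1 coprime1p.
by rewrite fibpSS coprimep_sym coprimep_addl_mul.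
Qed.

Lemma fib_dvd_gcd a b G : G %| fibp a -> G %| fibp b -> G %| fibp (gcdn a b).
Proof.
move: {2}(a + b)%N (leqnn (a + b)) => s.
elim: s a b => [|s IH] a b Hs Ha Hb.
  by move: Hs; rewrite leqn0 addn_eq0 => /andP[/eqP-> /eqP->].
have key : forall a b, (a + b <= s.+1)%N -> (b <= a)%N -> G %| fibp a -> G %| fibp b ->
     G %| fibp (gcdn a b).
  clear Ha Hb Hs a b => a [|b] Hs Hba Ha Hb; first by rewrite gcdn0.
  have Ec : a = ((a - b.+1) + b).+1 by rewrite addnC -addSn subnKC.
  move: Ha; rewrite Ec fib_add => Ha.
  have H1 : G %| fibp (a - b.+1) * fibp b.
    by move: Ha; rewrite dvdp_addr // dvdp_mull.
  have Hco : coprimep G (fibp b).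
    by rewrite coprimep_sym; apply: (coprimep_dvdl Hb); rewrite coprimep_sym fib_coprime.
  rewrite Gauss_dvdpl // in H1.
  have -> : gcdn ((a - b.+1 + b).+1) b.+1 = gcdn (a - b.+1) b.+1.
    by rewrite -addnS gcdnC gcdnDr gcdnC.
  apply: IH => //. lia.
have [Hab|Hab] := leqP b a; first by apply: key.
by rewrite gcdnC; apply: key => //; [rewrite addnC | apply: ltnW].
Qed.

Lemma fib_dvd d n : (d %| n)%N -> fibp d %| fibp n.
Proof.
case: d => [|d]; first by rewrite dvd0n => /eqP->; rewrite dvdpp.
case/dvdnP=> k ->; elim: k => [|k IH]; first by rewrite mul0n fibp0 dvdp0.
rewrite mulSn addnC addnS fib_add.
by apply: dvdp_add; [apply: dvdp_mull; exact: dvdpp | apply: dvdp_mulr; exact: IH].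
Qed.

Lemma fib_size_monic n : size (fibp n.+1) = n.+1 /\ fibp n.+1 \is monic.
Proof.
elim/ltn_ind: n => [[|[|n]]] IH.
- by rewrite fibp1 size_poly1 monic1.
- rewrite fibpSS fibp1 fibp0 mulr1 addr0 size_polyX monicX //.
- have [s1 m1] := IH n.+1 (ltnSn _); have [s0 m0] := IH n (ltnW (ltnSn _)).
  rewrite fibpSS.
  have sX : size ('X * fibp n.+2) = n.+3.
    by rewrite mulrC size_mulX ?s1 // -size_poly_eq0 s1.
  have lt : (size (fibp n.+1) < size ('X * fibp n.+2)%R)%N by rewrite sX s0.
  split; first by rewrite size_addl.
  by rewrite monicE lead_coefDl // mulrC lead_coefMX (monicP m1).
Qed.

Definition Lp n : {poly rat} := 2%:R * fibp n.+1 - 'X * fibp n.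

Lemma cassini0 n : fibp n.+1 ^+ 2 - 'X * fibp n.+1 * fibp n - fibp n ^+ 2 = (-1) ^+ n.
Proof.
elim: n => [|n IH]; first by rewrite fibp1 fibp0 expr0; ring.
rewrite fibpSS [in RHS]exprS -IH; ring.
Qed.

Lemma cassini n : Lp n ^+ 2 - ('X ^+ 2 + 4%:R) * fibp n ^+ 2 = 4%:R * (-1) ^+ n.
Proof. rewrite -cassini0 /Lp; ring. Qed.

Lemma fib_deriv n :
  ('X ^+ 2 + 4%:R) * (fibp n)^`() = n%:R * Lp n - 'X * fibp n.
Proof.
suff : forall n, ('X ^+ 2 + 4%:R) * (fibp n)^`() = n%:R * Lp n - 'X * fibp n /\
   ('X ^+ 2 + 4%:R) * (fibp n.+1)^`() = n.+1%:R * Lp n.+1 - 'X * fibp n.+1 by move=> /(_ n)[].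
elim=> [|m [IH1 IH2]].
  rewrite /Lp fibpSS fibp1 fibp0 !deriv0 derivC; split; ring.
split=> //.
have E : ('X ^+ 2 + 4%:R) * (fibp m.+2)^`() =
   ('X ^+ 2 + 4%:R) * fibp m.+1 + 'X * (('X ^+ 2 + 4%:R) * (fibp m.+1)^`())
   + ('X ^+ 2 + 4%:R) * (fibp m)^`().
  rewrite fibpSS derivD derivM derivX; ring.
rewrite E IH1 IH2 /Lp !fibpSS.
rewrite -[m.+2]addn2 -[m.+1]addn1 !natrD; ring.
Qed.

Lemma dvdp_polyC_1 (G : {poly rat}) (c : rat) : c != 0 -> G %| c%:P -> G %| 1.
Proof. by move=> c0; rewrite -[c%:P]mulr1 mul_polyC dvdpZr. Qed.

Lemma fib_sqfree n G : (0 < n)%N -> G * G %| fibp n -> G %| 1.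
Proof.
move=> n0 GG.
have GF : G %| fibp n by apply: dvdp_trans GG; apply: dvdp_mulr; exact: dvdpp.
have d1 : G %| (fibp n)^`().
  case/dvdpP: GG => H ->. rewrite !derivM.
  apply: dvdp_add; first by apply: dvdp_mull; apply: dvdp_mull; exact: dvdpp.
  apply: dvdp_mull; apply: dvdp_add; first by apply: dvdp_mull; exact: dvdpp.
  by apply: dvdp_mulr; exact: dvdpp.
have d2 : G %| (n%:R : rat)%:P * Lp n.
  have -> : (n%:R : rat)%:P * Lp n = ('X ^+ 2 + 4%:R) * (fibp n)^`() + 'X * fibp n.
    by rewrite fib_deriv rmorph_nat; ring.
  by apply: dvdp_add; apply: dvdp_mull.
have d3 : G %| Lp n.
  by move: d2; rewrite mul_polyC dvdpZr // pnatr_eq0 -lt0n.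
apply: (@dvdp_polyC_1 _ (4%:R * (-1) ^+ n)).
  by rewrite mulf_eq0 negb_or pnatr_eq0 /= expf_neq0 // oppr_eq0 oner_eq0.
rewrite rmorphM rmorphXn rmorphN1 rmorph_nat -cassini.
apply: dvdp_sub; first by rewrite expr2; apply: dvdp_mull.
by apply: dvdp_mull; rewrite expr2; apply: dvdp_mull.
Qed.

Fixpoint Qf (f n : nat) : {poly rat} :=
  if f is f'.+1 then fibp n %/ \prod_(d < n | (1 < d)%N && (d %| n)%N) Qf f' d else 0.
Definition Q n := Qf n.+1 n.
Definition Pp n := \prod_(d < n | (1 < d)%N && (d %| n)%N) Q d.
Definition Pc n := \prod_(d < n.+1 | (1 < d)%N && (d %| n)%N) Q d.

Lemma Qf_eq f g n : (n < f)%N -> (n < g)%N -> Qf f n = Qf g n.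
Proof.
elim: f g n => [//|f IH] [//|g] n /= Hf Hg.
congr (_ %/ _); apply: eq_bigr => d _; apply: IH.
  by apply: leq_trans (ltn_ord d) _.
by apply: leq_trans (ltn_ord d) _.
Qed.

Lemma QE n : Q n = fibp n %/ Pp n.
Proof.
rewrite /Q /= /Pp; congr (_ %/ _); apply: eq_bigr => d _; apply: Qf_eq => //.
Qed.

Lemma Pc_split n : (1 < n)%N -> Pc n = Q n * Pp n.
Proof.
move=> n1; rewrite /Pc /Pp big_mkcond big_ord_recr /= n1 dvdnn /=.
by rewrite mulrC -big_mkcond.
Qed.

Lemma Pc1 : Pc 1 = 1.
Proof. by rewrite /Pc big1 // => [[[|[|d]] //]]. Qed.

Lemma prod_sub_dvd (I : finType) (A B : pred I) (F : I -> {poly rat}) :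
  (forall i, A i -> B i) -> \prod_(i | A i) F i %| \prod_(i | B i) F i.
Proof.
move=> AB; rewrite (bigID A B) /=.
rewrite (eq_bigl A); first by apply: dvdp_mulr; exact: dvdpp.
by move=> i /=; case: (boolP (A i)) => [/AB ->|]; rewrite ?andbF.
Qed.

Lemma Pc_dvd_Pp g n : (0 < g)%N -> (g %| n)%N -> (g < n)%N -> Pc g %| Pp n.
Proof.
move=> g0 gn gln; rewrite /Pc /Pp (@big_ord_widen_cond _ _ _ g.+1 n (fun d => (1 < d)%N && (d %| g)%N) (fun d => Q d) gln).
apply: prod_sub_dvd => i /andP[/andP[i1 ig] _]; rewrite i1 /=.
exact: dvdn_trans ig gn.
Qed.

Definition Hyp n := forall d, (0 < d <= n)%N -> fibp d = Pc d.

Lemma Q_dvd_F d : Hyp d -> (1 < d)%N -> Q d %| fibp d.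
Proof.
move=> H d1; rewrite (H d); last by rewrite (ltnW d1) leqnn.
by rewrite Pc_split //; apply: dvdp_mulr; exact: dvdpp.
Qed.

Lemma step_coprime n k : (1 < n)%N -> Hyp n -> (0 < k)%N -> (k < n)%N ->
  coprimep (Q n) (fibp k).
Proof.
move=> n1 H k0 kn; apply/coprimepP => d dQ dF.
have n0 : (0 < n)%N by apply: ltnW.
have FnE : fibp n = Q n * Pp n by rewrite (H n) ?n0 ?leqnn // Pc_split.
have dFn : d %| fibp n by apply: dvdp_trans dQ _; rewrite FnE; apply: dvdp_mulr; exact: dvdpp.
have g0 : (0 < gcdn n k)%N by rewrite gcdn_gt0 n0.
have gk : (gcdn n k <= k)%N by apply: dvdn_leq => //; exact: dvdn_gcdr.
have gn : (gcdn n k < n)%N by apply: leq_ltn_trans gk kn.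
have dFg := fib_dvd_gcd dFn dF.
rewrite (H (gcdn n k)) in dFg; last by rewrite g0 ltnW.
have dPp : d %| Pp n by apply: dvdp_trans dFg _; apply: Pc_dvd_Pp => //; exact: dvdn_gcdl.
have : d * d %| fibp n by rewrite FnE; apply: dvdp_mul.
by move/(fib_sqfree n0); rewrite dvdp1 size_poly_eq1.
Qed.

Lemma Pp_dvd n : (1 < n)%N -> Hyp n.-1 -> Pp n %| fibp n.
Proof.
move=> n1 H.
have Hd : forall d, (d < n)%N -> Hyp d.
  by move=> d dn e /andP[e0 ed]; apply: H; rewrite e0 /= -ltnS prednK ?(ltnW n1) // (leq_ltn_trans ed).
suff : forall m, (m <= n)%N -> \prod_(d < m | (1 < d)%N && (d %| n)%N) Q d %| fibp n.
  by move/(_ n (leqnn n)).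
elim=> [|m IH] mn; first by rewrite big_ord0 dvd1p.
rewrite big_mkcond big_ord_recr /= -big_mkcond.
case: ifP => [/andP[m1 mdn]|_]; last by rewrite mulr1; apply: IH; apply: ltnW.
have co : coprimep (\prod_(d < m | (1 < d)%N && (d %| n)%N) Q d) (Q m).
  rewrite coprimep_sym; apply: (big_ind (fun p => coprimep (Q m) p)) => [|x y|i /andP[i1 _]].
  - exact: coprimep1.
  - by move=> cx cy; rewrite coprimepMr cx cy.
  - apply: (coprimep_dvdl (Q_dvd_F (Hd i (ltn_trans (ltn_ord i) mn)) i1)).
    exact: (step_coprime m1 (Hd m mn) (ltnW i1) (ltn_ord i)).
rewrite Gauss_dvdp // IH ?(ltnW mn) //=.
apply: dvdp_trans (Q_dvd_F (Hd m mn) m1) _; exact: fib_dvd.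
Qed.

Lemma fib_Pc n : (0 < n)%N -> fibp n = Pc n.
Proof.
elim/ltn_ind: n => n IH n0.
case: n IH n0 => [//|[|n]] IH _; first by rewrite Pc1 fibp1.
have H : Hyp n.+1 by move=> d /andP[d0 dn]; apply: IH.
rewrite Pc_split // QE divpK //; exact: Pp_dvd.
Qed.

Lemma HypA n : Hyp n.
Proof. by move=> d /andP[d0 _]; exact: fib_Pc. Qed.

Lemma FQP n : (1 < n)%N -> fibp n = Q n * Pp n.
Proof. by move=> n1; rewrite fib_Pc ?Pc_split // ltnW. Qed.

Lemma Q_monic n : (1 < n)%N -> Q n \is monic.
Proof.
elim/ltn_ind: n => n IH n1.
have Fm : fibp n \is monic by case: n n1 {IH} => [//|m _]; case: (fib_size_monic m).
have Pm : Pp n \is monic.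
  by apply: monic_prod => i /andP[i1 _]; apply: IH.
by move: Fm; rewrite FQP // monicMr.
Qed.

Lemma irr_ncop_dvd (q p : {poly rat}) : irreducible_poly q -> ~~ coprimep q p -> q %| p.
Proof.
move=> irq; rewrite coprimep_def => ncop.
have e := irq _ ncop (dvdp_gcdl q p).
by rewrite -(eqp_dvdl _ e) dvdp_gcdr.
Qed.

Lemma irr_size (q : {poly rat}) : irreducible_poly q -> size q != 1%N.
Proof. by case=> s _; rewrite neq_ltn s orbT. Qed.

Lemma irr_not_dvd1 (q : {poly rat}) : irreducible_poly q -> ~~ (q %| 1).
Proof. by move=> irq; rewrite dvdp1 irr_size. Qed.

Lemma Q_fibotomic n : (1 < n)%N -> is_fibotomic n (Q n).
Proof.
move=> n1.
have n0 : (0 < n)%N by apply: ltnW.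
have QF : Q n %| fibp n by rewrite FQP //; apply: dvdp_mulr; exact: dvdpp.
split; first exact: Q_monic.
  move=> q irq; apply/negP => H.
  have : q * q %| fibp n by rewrite -expr2; apply: dvdp_trans H QF.
  by move/(fib_sqfree n0); apply/negP; apply: irr_not_dvd1.
move=> q _ irq; apply/idP/idP.
  move=> qQ; rewrite (dvdp_trans qQ QF) /=.
  apply/forallP => k; apply/implyP => k0; apply/negP => qF.
  have := step_coprime n1 (@HypA n) k0 (ltn_ord k).
  move/coprimepP/(_ q qQ qF); rewrite -size_poly_eq1.
  by apply/negP; apply: irr_size.
case/andP => qF /forallP Hk.
rewrite FQP // in qF.
case: (boolP (coprimep q (Q n))) => [co|nco]; last exact: irr_ncop_dvd.
rewrite (Gauss_dvdpr _ co) in qF.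
have : coprimep q (Pp n).
  apply: (big_ind (fun p => coprimep q p)) => [|x y cx cy|i /andP[i1 _]].
  - exact: coprimep1.
  - by rewrite coprimepMr cx cy.
  apply/negPn/negP => nco; have qQi := irr_ncop_dvd irq nco.
  have := Hk i; rewrite (ltnW i1) /=; apply/negP/negPn.
  apply: dvdp_trans qQi _; apply: Q_dvd_F => //; exact: HypA.
move/coprimepP/(_ q (dvdpp q) qF); rewrite -size_poly_eq1.
by rewrite (negbTE (irr_size irq)).
Qed.

Lemma irr_exists (p : {poly rat}) : (1 < size p)%N -> exists q, irreducible_poly q /\ q %| p.
Proof.
move: {2}(size p) (erefl (size p)) => s; elim/ltn_ind: s p => s IH p sp p1.
case: (classic (irreducible_poly p)) => [ir|nir].
  by exists p; split=> //; exact: dvdpp.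
have : exists q : {poly rat}, size q != 1%N /\ q %| p /\ ~~ (q %= p).
  apply: NNPP => hne; apply: nir; split; first by [].
  move=> q sq qp; apply: NNPP => nq; apply: hne; exists q; split=> //; split=> //.
  by apply/negP.
case=> q [sq [qp nqp]].
have p0 : p != 0 by rewrite -size_poly_gt0 (ltnW p1).
have q0 : q != 0 by apply/eqP=> q0; move: qp; rewrite q0 dvd0p; apply/negP.
have sqp : (size q < size p)%N.
  by rewrite ltn_neqAle (dvdp_leq p0 qp) andbT dvdp_size_eqp.
have q1 : (1 < size q)%N.
  by rewrite ltn_neqAle eq_sym sq /= size_poly_gt0.
have [r [ir rq]] := IH (size q) (leq_trans sqp (eq_leq sp)) q erefl q1.
by exists r; split=> //; exact: dvdp_trans rq qp.
Qed.

Lemma irr_monic (q : {poly rat}) : irreducible_poly q ->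
  [/\ irreducible_poly ((lead_coef q)^-1 *: q), ((lead_coef q)^-1 *: q) \is monic
    & ((lead_coef q)^-1 *: q %= q)].
Proof.
move=> irq.
have lq : lead_coef q != 0 by rewrite lead_coef_eq0 irredp_neq0.
have li : (lead_coef q)^-1 != 0 by rewrite invr_eq0.
have e : (lead_coef q)^-1 *: q %= q by apply: eqp_scale.
split=> //.
  split; first by rewrite size_scale //; case: irq.
  move=> r sr; rewrite dvdpZr // => rq.
  by apply: eqp_trans (irq _ sr rq) _; rewrite eqp_sym.
by rewrite monicE lead_coefZ mulVf.
Qed.

Lemma div_sqf (p p' : {poly rat}) : p != 0 -> p' != 0 ->
  (forall q, irreducible_poly q -> ~~ (q ^+ 2 %| p)) ->
  (forall q, irreducible_poly q -> q %| p -> q %| p') -> p %| p'.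
Proof.
move: {2}(size p) (erefl (size p)) => s; elim/ltn_ind: s p p' => s IH p p' sp p0 p'0 sqf dv.
case: (leqP (size p) 1) => [ps|p1].
  have : size p == 1%N by rewrite eqn_leq ps size_poly_gt0.
  by rewrite size_poly_eq1 => e; rewrite (eqp_dvdl _ e) dvd1p.
have [q [irq qp]] := irr_exists p1.
have qp' := dv q irq qp.
case/dvdpP: qp => p1' E; case/dvdpP: qp' => p2 E'.
have q0 := irredp_neq0 irq.
have p10 : p1' != 0 by apply/eqP => z; move: p0; rewrite E z mul0r eqxx.
have p20 : p2 != 0 by apply/eqP => z; move: p'0; rewrite E' z mul0r eqxx.
have sq : (1 < size q)%N by case: irq.
have lt : (size p1' < s)%N.
  rewrite -sp E size_mul //; move: sq; case: (size q) => [//|k] /=.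
  by rewrite addnS /= -{1}(addn0 (size p1')) ltn_add2l.
rewrite E E'; apply: dvdp_mul; last exact: dvdpp.
apply: (IH _ lt p1' p2 erefl p10 p20).
  move=> r irr; apply/negP => H; have := sqf r irr; rewrite E.
  by apply/negP/negPn; apply: dvdp_mulr.
move=> r irr rp1.
have : r %| p' by apply: dv => //; rewrite E; apply: dvdp_mulr.
rewrite E'; case: (boolP (coprimep r q)) => [co|nco].
  by rewrite Gauss_dvdpl.
have rq := irr_ncop_dvd irr nco.
have e := irq r (irr_size irr) rq.
have qp1 : q %| p1' by rewrite -(eqp_dvdl _ e).
have := sqf q irq; rewrite E expr2.
by move/negP => []; apply: dvdp_mul => //; exact: dvdpp.
Qed.

Lemma fib_unique n p p' : is_fibotomic n p -> is_fibotomic n p' -> p = p'.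
Proof.
case=> mp sp dp [mp' sp' dp'].
have key : forall q, irreducible_poly q -> (q %| p) = (q %| p').
  move=> q irq; have [irm mm e] := irr_monic irq.
  by rewrite -!(eqp_dvdl _ e) dp // dp'.
have p0 := monic_neq0 mp; have p0' := monic_neq0 mp'.
apply/eqP; rewrite -eqp_monic // /eqp.
rewrite !div_sqf // => q irq; by rewrite key.
Qed.

Section Eval.
Variable R : rcfType.
Implicit Types (w x : R).

Definition ev (p : {poly rat}) x := (map_poly (ratr : rat -> R) p).[x].

Lemma evM p q x : ev (p * q) x = ev p x * ev q x.
Proof. by rewrite /ev rmorphM hornerM. Qed.

Lemma ev_prod I (r : seq I) (P : pred I) (F : I -> {poly rat}) x :
  ev (\prod_(i <- r | P i) F i) x = \prod_(i <- r | P i) ev (F i) x.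
Proof. by rewrite /ev rmorph_prod horner_prod. Qed.

Lemma ev_fibSS n x : ev (fibp n.+2) x = x * ev (fibp n.+1) x + ev (fibp n) x.
Proof. by rewrite /ev fibpSS rmorphD rmorphM /= map_polyX hornerD hornerM hornerX. Qed.

Lemma w2p1 w : w ^+ 2 + 1 != 0.
Proof. by rewrite lt0r_neq0 // ltr_pwDr ?ltr01 ?sqr_ge0. Qed.

Lemma fib_eval n w : w != 0 ->
  ev (fibp n) (w - w^-1) * (w + w^-1) = w ^+ n - (- w^-1) ^+ n.
Proof.
move=> w0.
suff : forall n, ev (fibp n) (w - w^-1) * (w + w^-1) = w ^+ n - (- w^-1) ^+ n /\
  ev (fibp n.+1) (w - w^-1) * (w + w^-1) = w ^+ n.+1 - (- w^-1) ^+ n.+1 by move/(_ n)=> [].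
elim=> [|m [IH1 IH2]].
  rewrite /ev fibp0 fibp1 rmorph0 rmorph1 horner0 hornerC; split; rewrite ?expr0 ?expr1; field.
  all: try exact: w0.
split=> //.
rewrite ev_fibSS mulrDl -mulrA IH2 IH1 !exprS; field.
all: try exact: w0.
Qed.

Lemma omega_key x s : 0 <= s -> s ^+ 2 = x ^+ 2 + 4 ->
  0 < (x + s) / 2 /\ (x + s) / 2 - ((x + s) / 2)^-1 = x.
Proof.
move=> s0 s2.
have xs : 0 < x + s.
  rewrite ltNge; apply/negP => H.
  have H1 : 0 <= (- x - s) * s by apply: mulr_ge0 => //; lra.
  have H2 : 0 <= (- x - s) ^+ 2 by apply: sqr_ge0.
  nra.
have wp : 0 < (x + s) / 2 by rewrite divr_gt0.
split=> //.
have w0 : (x + s) / 2 != 0 by rewrite gt_eqF.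
have h : (x + s) / 2 * ((x + s) / 2) = x * ((x + s) / 2) + 1.
  apply/eqP; rewrite -subr_eq0; apply/eqP.
  have -> : (x + s) / 2 * ((x + s) / 2) - (x * ((x + s) / 2) + 1) = (s ^+ 2 - x ^+ 2 - 4) / 4 by field.
  by rewrite s2; field.
have : ((x + s) / 2)^-1 = (x + s) / 2 - x by apply: (mulfI w0); rewrite mulfV // mulrBr h; ring.
move=> ->; ring.
Qed.

Lemma omega_prop x : let w := (x + Num.sqrt (x ^+ 2 + 4)) / 2 in
  0 < w /\ w - w^-1 = x.
Proof.
apply: omega_key; first exact: sqrtr_ge0.
by rewrite sqr_sqrtr // addr_ge0 ?sqr_ge0.
Qed.

End Eval.

Section Eval2.
Variable R : rcfType.
Implicit Types (w x : R).

Definition T n w : R :=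
  (if n == 2%N then -1 else 1) * ((map_poly intr 'Phi_n).[- w ^+ 2] / w ^+ totient n).

Lemma divisors_big (F : nat -> R) n : (0 < n)%N ->
  \prod_(d <- divisors n) F d = \prod_(d < n.+1 | (d %| n)%N) F d.
Proof.
move=> n0; rewrite -(big_mkord (fun d => d %| n)%N) -[in RHS]big_filter.
rewrite (@perm_big _ _ _ _ (divisors n) [seq i <- index_iota 0 n.+1 | (i %| n)%N]) //.
apply: uniq_perm.
- exact: divisors_uniq.
- by rewrite filter_uniq // iota_uniq.
move=> d; rewrite mem_filter mem_index_iota -dvdn_divisors //.
by case: (boolP (d %| n)%N) => //= dn; rewrite ltnS dvdn_leq.
Qed.

Lemma cyclo_prod (y : R) n : (0 < n)%N ->
  \prod_(d < n.+1 | (d %| n)%N) (map_poly intr 'Phi_d).[y] = y ^+ n - 1.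
Proof.
move=> n0; rewrite -(divisors_big (fun d => (map_poly intr 'Phi_d).[y]) n0).
rewrite -horner_prod -rmorph_prod prod_Cyclotomic //.
by rewrite rmorphB rmorph1 /= map_polyXn hornerD hornerN hornerXn hornerC.
Qed.

Lemma Phi1 : 'Phi_1 = 'X - 1.
Proof.
have := prod_Cyclotomic (isT : (0 < 1)%N).
by rewrite (_ : divisors 1 = [:: 1%N]) // big_seq1 expr1.
Qed.

End Eval2.

Lemma cond_split1 n (i : 'I_n.+1) (i1 : (1 < n.+1)%N) : (0 < n)%N ->
  ((1 < i) && (i %| n))%N = ((i %| n)%N && (i != Ordinal i1)).
Proof.
move=> n0; rewrite -(inj_eq val_inj) /=.
case: i => [[|[|i]] hi] /=.
- by rewrite dvd0n eqn0Ngt n0.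
- by rewrite andbF.
- by rewrite andbT.
Qed.

Lemma sum_tot n : (0 < n)%N -> (\sum_(d < n.+1 | (1 < d) && (d %| n)) totient d)%N = n.-1.
Proof.
move=> n0; have i1 : (1 < n.+1)%N by rewrite ltnS.
have := sum_totient_dvd n; rewrite (bigD1 (Ordinal i1)) /= ?dvd1n // => E.
rewrite (eq_bigl _ _ (fun i => cond_split1 i i1 n0)).
by rewrite -[in RHS]E add1n.
Qed.

Section Eval3.
Variable R : rcfType.
Implicit Types (w x : R).

Lemma prod_split1 n (G : nat -> R) : (0 < n)%N ->
  \prod_(d < n.+1 | (d %| n)%N) G d = G 1%N * \prod_(d < n.+1 | (1 < d)%N && (d %| n)%N) G d.
Proof.
move=> n0; have i1 : (1 < n.+1)%N by rewrite ltnS.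
rewrite (bigD1 (Ordinal i1)) /= ?dvd1n //; congr (_ * _).
apply: eq_bigl => i; by rewrite cond_split1.
Qed.

Lemma prod_eps n : (0 < n)%N ->
  \prod_(d < n.+1 | (1 < d)%N && (d %| n)%N) (if val d == 2%N then -1 else 1 : R) =
  if odd n then 1 else -1.
Proof.
move=> n0; case: ifPn => on.
  apply: big1 => i /andP[_ idn]; case: eqP => // i2.
  by move: on; rewrite -[n](divnK idn) i2 oddM andbF.
have i2 : (2 < n.+1)%N.
  by rewrite ltnS; case: n n0 on => [|[|n]].
rewrite (bigD1 (Ordinal i2)) /=; last by rewrite dvdn2 on.
rewrite big1 ?mulr1 // => i /andP[_]; rewrite -(inj_eq val_inj) /= => /negPf -> //.
Qed.

Lemma E_lemma n w : (0 < n)%N -> w != 0 ->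
  ev (fibp n) (w - w^-1) = \prod_(d < n.+1 | (1 < d)%N && (d %| n)%N) T d w.
Proof.
move=> n0 w0.
set y := - w ^+ 2.
have hF := fib_eval n w0.
have hA := cyclo_prod y n0.
rewrite (prod_split1 (fun d => (map_poly intr 'Phi_d).[y]) n0) /= Phi1 in hA.
rewrite rmorphB rmorph1 /= map_polyX hornerD hornerN hornerX hornerC in hA.
rewrite /T big_split /= prod_eps // big_split /= prodfV prodrXr sum_tot // -/y.
set A := \prod_(d < n.+1 | _) (map_poly intr 'Phi_d).[_] in hA *.
have w21 := w2p1 w.
have wiw : w + w^-1 != 0.
  have -> : w + w^-1 = (w ^+ 2 + 1) / w by field.
  by rewrite mulf_neq0 // invr_eq0.
have y1 : y - 1 != 0 by rewrite /y -opprD oppr_eq0.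
have eF : ev (fibp n) (w - w^-1) = (w ^+ n - (- w^-1) ^+ n) / (w + w^-1).
  by rewrite -hF (mulfK wiw).
have eA : A = (y ^+ n - 1) / (y - 1) by rewrite -hA [_ * A]mulrC (mulfK y1).
rewrite eF eA /y.
clear eA hA eF hF A.
case: n n0 => [//|m] _.
rewrite (exprNn (w^-1)) (exprNn (w ^+ 2)) exprVn -signr_odd [odd _]/=.
rewrite [(w ^+ 2) ^+ m.+1]exprS -exprM mulnC exprM [w ^+ m.+1]exprS.
set a := w ^+ m.
have a0 : a != 0 by rewrite expf_neq0.
clearbody a; clear y1 wiw; rewrite /y; clear y.
case: (odd m) => /=; rewrite ?expr0 ?expr1; field.
all: by rewrite a0 w0 -expr2 -opprD oppr_eq0 w21.
Qed.

End Eval3.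

Section Eval4.
Variable R : rcfType.
Implicit Types (w x : R).

Definition Hom N (A : {poly rat}) : {poly R} :=
  \sum_(i < size A) (ratr A`_i : R) *: (('X ^+ 2 - 1) ^+ i * 'X ^+ (N - i)).

Lemma hom_eval N (A : {poly rat}) w : (size A <= N.+1)%N -> w != 0 ->
  (Hom N A).[w] = w ^+ N * ev A (w - w^-1).
Proof.
move=> sA w0; rewrite /Hom /ev horner_sum horner_coef size_map_poly mulr_sumr.
apply: eq_bigr => i _; rewrite coef_map hornerZ hornerM horner_exp hornerXn.
rewrite (_ : ('X ^+ 2 - 1).[w] = w ^+ 2 - 1); last first.
  by rewrite hornerD hornerN hornerXn hornerC.
have iN : (i <= N)%N by rewrite -ltnS (leq_trans (ltn_ord i) sA).
rewrite -{2}(subnKC iN) exprD.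
have -> : w ^+ 2 - 1 = (w - w^-1) * w by field.
rewrite exprMn /=; ring.
Qed.

Lemma poly_zero (p : {poly R}) : (forall w, w != 0 -> p.[w] = 0) -> p = 0.
Proof.
move=> H; apply: (@roots_geq_poly_eq0 _ p [seq (i.+1)%:R | i <- iota 0 (size p)]).
- apply/allP => x /mapP [i _ ->]; apply/eqP; apply: H.
  by rewrite pnatr_eq0.
- rewrite map_inj_uniq ?iota_uniq // => i j /eqP; rewrite eqr_nat => /eqP [].
  done.
- by rewrite size_map size_iota.
Qed.

Lemma cancel_lemma (A B : {poly rat}) (U : {poly R}) k :
  B != 0 ->
  (forall w, w != 0 -> ev A (w - w^-1) * ev B (w - w^-1) = U.[w] / w ^+ k * ev B (w - w^-1)) ->
  forall w, w != 0 -> ev A (w - w^-1) = U.[w] / w ^+ k.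
Proof.
move=> B0 H.
pose N := size A; pose M := size B.
pose D := Hom N A * 'X ^+ k - U * 'X ^+ N.
pose E := Hom M B.
have hD : forall w, w != 0 -> D.[w] = w ^+ N * w ^+ k * (ev A (w - w^-1) - U.[w] / w ^+ k).
  move=> w w0; rewrite /D hornerD hornerN !hornerM !hornerXn hom_eval //.
  by field; rewrite expf_neq0.
have DE : D * E = 0.
  apply: poly_zero => w w0.
  rewrite hornerM hD // /E hom_eval //.
  have := H w w0; set a := ev A _; set b := ev B _; set c := U.[w] / _ => Hw.
  transitivity (w ^+ N * w ^+ k * w ^+ M * ((a - c) * b)); first by ring.
  by rewrite mulrBl Hw subrr mulr0.
have E0 : E != 0.
  have mB : map_poly (ratr : rat -> R) B != 0 by rewrite map_poly_eq0.
  have [x0 hx0] : exists x0 : R, ev B x0 != 0.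
    apply: NNPP => nex; move/negP: mB; apply; apply/eqP; apply: poly_zero => x _.
    case: (eqVneq (ev B x) 0) => // hx; exfalso; apply: nex; exists x; exact: hx.
  have [wp we] := omega_prop x0.
  set w1 := (x0 + _) / 2 in wp we.
  have w10 : w1 != 0 by rewrite gt_eqF.
  apply/eqP => E0; have := @hom_eval M B w1 (leqnSn _) w10.
  rewrite -/E E0 horner0 we => /esym /eqP; rewrite mulf_eq0 expf_eq0 (negPf w10) andbF /=.
  by rewrite (negPf hx0).
have D0 : D = 0 by move/eqP: DE; rewrite mulf_eq0 (negPf E0) orbF => /eqP.
move=> w w0; have := hD w w0; rewrite D0 horner0 => /esym /eqP.
rewrite !mulf_eq0 !expf_eq0 (negPf w0) !andbF /= subr_eq0 => /eqP //.
Qed.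

Lemma prod_recr_cond (G : nat -> R) n : (1 < n)%N ->
  \prod_(d < n.+1 | (1 < d)%N && (d %| n)%N) G d = G n * \prod_(d < n | (1 < d)%N && (d %| n)%N) G d.
Proof.
move=> n1; rewrite big_mkcond big_ord_recr /= n1 dvdnn /=.
by rewrite mulrC -big_mkcond.
Qed.

Lemma T_U n w : T n w =
  ((if n == 2%N then -1 else 1) *: (map_poly intr 'Phi_n \Po (- 'X ^+ 2))).[w] / w ^+ totient n.
Proof. by rewrite /T hornerZ horner_comp hornerN hornerXn mulrA. Qed.

Lemma Q_eval n : (1 < n)%N -> forall w, w != 0 -> ev (Q n) (w - w^-1) = T n w.
Proof.
elim/ltn_ind: n => n IH n1 w w0.
rewrite T_U; apply: (cancel_lemma (B := Pp n)) => // [|v v0].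
  apply: monic_neq0; apply: monic_prod => i /andP[i1 _]; exact: Q_monic.
rewrite -evM -FQP // E_lemma ?(ltnW n1) //.
rewrite (prod_recr_cond (fun d => T d v) n1) -T_U.
rewrite /Pp ev_prod; congr (_ * _); apply: eq_bigr => i /andP[i1 _].
by rewrite IH.
Qed.

End Eval4.

Unset Implicit Arguments.
Set Strict Implicit.

Theorem mainTheorem4 (n : nat) (hn : (2 <= n)%N) :
  (exists p : {poly rat}, is_fibotomic n p) /\
  forall (p : {poly rat}), is_fibotomic n p ->
  forall (R : rcfType) (x : R),
    let w := (x + Num.sqrt (x ^+ 2 + 4)) / 2 in
    (map_poly ratr p).[x] =
      (if n == 2%N then -1 else 1) *
      ((map_poly intr 'Phi_n).[- w ^+ 2] / w ^+ totient n).
Proof.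
split; first by exists (Q n); exact: Q_fibotomic.
move=> p pf R x w.
have -> : p = Q n by apply: fib_unique pf (Q_fibotomic hn).
have [wp we] : 0 < w /\ w - w^-1 = x := omega_prop x.
rewrite -{1}we.
have w0 : w != 0 by rewrite gt_eqF.
exact: (Q_eval hn w0).
Qed.
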